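(* Let $d>0$, let $\mathcal{S}$ be the 4-PAM constellation, and let $\mathcal{B}\subset\{0,1\}^{2N}$ be a binary linear code with at least two codewords. (i) If $\mathcal{S}$ is labeled by $\boldsymbol{q}=[0,1,3,2]$ and $\mathcal{B}$ contains a codeword $\boldsymbol{b}''$ with $b''_2[k]=1$ for all $k=1,\dots,N$, then $\mathsf{L}(\mathcal{B})=0$. (ii) If $\mathcal{S}$ is labeled by $\boldsymbol{q}=[0,2,3,1]$ and $\mathcal{B}$ contains a codeword $\boldsymbol{b}''$ with $b''_1[k]=1$ for all $k=1,\dots,N$, then $\mathsf{L}(\mathcal{B})=0$.
   Context: $\mathcal{S}=\{s_1,s_2,s_3,s_4\}$ with $s_1=-3d$, $s_2=-d$, $s_3=d$, $s_4=3d$. A labeling is a bijection $\Phi_{\mathcal{S}}:\{0,1\}^2\to\mathcal{S}$, described by $\boldsymbol{q}=[q_1,\dots,q_4]$ where $q_i$ is the integer whose two-bit representation $[b_1,b_2]$ (most significant bit $b_1$ first) is $\Phi_{\mathcal{S}}^{-1}(s_i)$. A codeword of $\mathcal{B}$ is written $\boldsymbol{b}=[\boldsymbol{b}[1],\dots,\boldsymbol{b}[N]]$ with $\boldsymbol{b}[k]=[b_1[k],b_2[k]]$, and the CM code is $\mathcal{X}=\{[\Phi_{\mathcal{S}}(\boldsymbol{b}[1]),\dots,\Phi_{\mathcal{S}}(\boldsymbol{b}[N])]:\boldsymbol{b}\in\mathcal{B}\}$. For $\boldsymbol{x},\hat{\boldsymbol{x}}\in\mathcal{S}^N$ and each $k$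 with $x[k]\neq\hat{x}[k]$: $\mu^{\mathcal{X}}_k=\sigma^{2,\mathcal{X}}_k=(x[k]-\hat{x}[k])^2/(4d^2)$; $\mu^{\mathcal{B}}_k=\sigma^{2,\mathcal{B}}_k=(x[k]-\hat{x}[k])^2/(4d^2)$ except that if $\{x[k],\hat{x}[k]\}=\{s_1,s_4\}$ then $\mu^{\mathcal{B}}_k=3$, $\sigma^{2,\mathcal{B}}_k=1$. Summing over $k$ with $x[k]\neq\hat{x}[k]$, $a^{\mathcal{X}}(\boldsymbol{x},\hat{\boldsymbol{x}})=\sum_k\mu^{\mathcal{X}}_k/\sqrt{\sum_k\sigma^{2,\mathcal{X}}_k}$ and $a^{\mathcal{B}}(\boldsymbol{x},\hat{\boldsymbol{x}})=\sum_k\mu^{\mathcal{B}}_k/\sqrt{\sum_k\sigma^{2,\mathcal{B}}_k}$ (normalized distances of the symbol-wise ML decoder and of the bit-wise max-log decoder under the zero-crossing approximation). The asymptotic loss of the code is $\mathsf{L}(\mathcal{B})=20\log_{10}\Big(\min_{\boldsymbol{x}\neq\hat{\boldsymbol{x}}\in\mathcal{X}}a^{\mathcal{X}}(\boldsymbol{x},\hat{\boldsymbol{x}})\big/\min_{\boldsymbol{x}\neq\hat{\boldsymbol{x}}\in\mathcal{X}}a^{\mathcal{B}}(\boldsymbol{x},\hat{\boldsymbol{x}})\Big)$ dB. *)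

(* Defs.v *)
From HB Require Import structures.
From mathcomp Require Import all_boot all_order all_algebra.
From mathcomp Require Import reals exp.
Set Implicit Arguments.
Unset Strict Implicit.
Unset Printing Implicit Defensive.
Import Order.TTheory GRing.Theory Num.Theory.
Local Open Scope ring_scope.

Section CM.
Variable R : realType.

(* A binary word of length 2N, organised as N bit pairs b[k] = (b1[k], b2[k]). *)
Definition bword (N : nat) := {ffun 'I_N -> bool * bool}.

Definition linear_code (N : nat) (B : {set bword N}) : Prop :=
  [ffun=> (false, false)] \in B /\
  forall b b' : bword N, b \in B -> b' \in B ->
    [ffun k => (xorb (b k).1 (b' k).1, xorb (b k).2 (b' k).2)] \in B.

(* 4-PAM symbols s_1..s_4 = -3d,-d,d,3d, indexed here by i = 0..3 (s_{i+1}). *)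
Definition pam (d : R) (i : nat) : R := ((2 * i)%:R - 3) * d.

(* Labeling q = [q_1;..;q_4]: the pair [b1,b2] (b1 MSB) is mapped to s_i,
   where q_i = 2 b1 + b2. *)
Definition Phi (d : R) (q : seq nat) (b : bool * bool) : R :=
  pam d (index (2 * b.1 + b.2)%N q).

Definition cm_word (d : R) (q : seq nat) (N : nat) (b : bword N)
  : {ffun 'I_N -> R} := [ffun k => Phi d q (b k)].

Definition cm_code (d : R) (q : seq nat) (N : nat) (B : {set bword N})
  : seq {ffun 'I_N -> R} := [seq cm_word d q b | b <- enum B].

Definition muX (d x xh : R) : R := (x - xh) ^+ 2 / (4 * d ^+ 2).
Definition sigX (d x xh : R) : R := (x - xh) ^+ 2 / (4 * d ^+ 2).
Definition is_s1s4 (d x xh : R) : bool :=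
  ((x == pam d 0) && (xh == pam d 3)) || ((x == pam d 3) && (xh == pam d 0)).
Definition muB (d x xh : R) : R := if is_s1s4 d x xh then 3 else muX d x xh.
Definition sigB (d x xh : R) : R := if is_s1s4 d x xh then 1 else sigX d x xh.

Definition aX (d : R) (N : nat) (x xh : {ffun 'I_N -> R}) : R :=
  (\sum_(k | x k != xh k) muX d (x k) (xh k)) /
    Num.sqrt (\sum_(k | x k != xh k) sigX d (x k) (xh k)).
Definition aB (d : R) (N : nat) (x xh : {ffun 'I_N -> R}) : R :=
  (\sum_(k | x k != xh k) muB d (x k) (xh k)) /
    Num.sqrt (\sum_(k | x k != xh k) sigB d (x k) (xh k)).

Definition seqmin (s : seq R) : R := foldr Num.min (head 0 s) s.

Definition distinct_pairs (N : nat) (X : seq {ffun 'I_N -> R}) :=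
  [seq p <- [seq (x, xh) | x <- X, xh <- X] | p.1 != p.2].

Definition min_aX (d : R) (q : seq nat) (N : nat) (B : {set bword N}) : R :=
  seqmin [seq aX d p.1 p.2 | p <- distinct_pairs (cm_code d q B)].
Definition min_aB (d : R) (q : seq nat) (N : nat) (B : {set bword N}) : R :=
  seqmin [seq aB d p.1 p.2 | p <- distinct_pairs (cm_code d q B)].

Definition log10 (x : R) : R := ln x / ln 10.

Definition asym_loss (d : R) (q : seq nat) (N : nat) (B : {set bword N}) : R :=
  20 * log10 (min_aX d q B / min_aB d q B).

End CM.

(* Main.v *)
Require Import Defs.
From HB Require Import structures.
From mathcomp Require Import all_boot all_order all_algebra.
From mathcomp Require Import reals exp.
From mathcomp Require Import ring lra.
Import Order.TTheory GRing.Theory Num.Theory.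
Local Open Scope ring_scope.
Set Implicit Arguments.

Section S.
Variable R : realType.
Variable d : R.
Hypothesis dpos : 0 < d.

Lemma d0 : d != 0. Proof. by rewrite gt_eqF. Qed.

Lemma muX_pam i j : muX d (pam d i) (pam d j) = (i%:R - j%:R) ^+ 2.
Proof.
rewrite /muX /pam !natrM. have := d0 => h. by field.
Qed.

Lemma pam_eq i j : (pam d i == pam d j) = (i == j).
Proof.
by rewrite /pam (inj_eq (mulIf d0)) (inj_eq (addIr _)) eqr_nat eqn_pmul2l.
Qed.

Lemma s14_pam i j : is_s1s4 d (pam d i) (pam d j) =
  ((i == 0) && (j == 3)) || ((i == 3) && (j == 0)).
Proof. by rewrite /is_s1s4 !pam_eq. Qed.

Definition xor3 (u v w : bool * bool) :=
  (xorb (xorb u.1 v.1) w.1, xorb (xorb u.2 v.2) w.2).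

Definition posfacts q (u v w : bool * bool) :=
  let x := Phi d q u in let xh := Phi d q v in
  let y := Phi d q w in let yh := Phi d q (xor3 u v w) in
  [/\ (x != xh) = (y != yh), is_s1s4 d y yh = false,
      sigX d y yh = sigB d x xh, sigB d x xh <= muB d x xh
    & sigX d y yh <= muX d x xh].

Lemma sigX_pam i j : sigX d (pam d i) (pam d j) = (i%:R - j%:R) ^+ 2.
Proof. exact: muX_pam. Qed.

Ltac crunch := rewrite /posfacts /Phi /sigB /muB /=
   ?pam_eq ?s14_pam /= ?muX_pam ?sigX_pam; split => //; lra.

Lemma pos1 (u v w : bool * bool) : w.2 -> posfacts [:: 0; 1; 3; 2]%N u v w.
Proof.
case: w => [[] []] //= _; case: u => [[] []]; case: v => [[] []]; crunch.
Qed.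
Lemma pos2 (u v w : bool * bool) : w.1 -> posfacts [:: 0; 2; 3; 1]%N u v w.
Proof.
case: w => [[] []] //= _; case: u => [[] []]; case: v => [[] []]; crunch.
Qed.

Lemma divsqrt (a : R) : 0 <= a -> a / Num.sqrt a = Num.sqrt a.
Proof.
move=> ha; have [->|a0] := eqVneq a 0; first by rewrite sqrtr0 mul0r.
have s0 : Num.sqrt a != 0 by rewrite sqrtr_eq0 -ltNge lt_def a0.
by rewrite -{1}(sqr_sqrtr ha) expr2 mulfK.
Qed.

Lemma sigX_ge0 x y : 0 <= sigX d x y.
Proof. by rewrite /sigX divr_ge0 // ?sqr_ge0 // mulr_ge0 // sqr_ge0. Qed.

Lemma le_div_sqrt (S M : R) : 0 <= S -> S <= M -> Num.sqrt S <= M / Num.sqrt S.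
Proof.
move=> hS hSM; rewrite -{1}divsqrt //; apply: ler_wpM2r => //.
by rewrite invr_ge0 sqrtr_ge0.
Qed.

Definition xorw N (b b' : bword N) : bword N :=
  [ffun k => (xorb (b k).1 (b' k).1, xorb (b k).2 (b' k).2)].

Lemma companion q (sel : bool * bool -> bool)
  (Hpos : forall u v w : bool * bool, sel w -> posfacts q u v w)
  N (b b' b'' : bword N) (hs : forall k, sel (b'' k)) :
  let x := cm_word d q b in let xh := cm_word d q b' in
  let y := cm_word d q b'' in let yh := cm_word d q (xorw (xorw b b') b'') in
  x != xh -> [/\ y != yh, aX d y yh <= aB d x xh & aB d y yh <= aX d x xh].
Proof.
move=> x xh y yh hne.
have ex k : x k = Phi d q (b k) by rewrite ffunE.
have exh k : xh k = Phi d q (b' k) by rewrite ffunE.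
have ey k : y k = Phi d q (b'' k) by rewrite ffunE.
have eyh k : yh k = Phi d q (xor3 (b k) (b' k) (b'' k)) by rewrite !ffunE.
have P k := Hpos (b k) (b' k) (b'' k) (hs k).
have epred : (fun k => y k != yh k) =1 (fun k => x k != xh k).
  by move=> k; rewrite ey eyh ex exh; case: (P k).
have esum (F : 'I_N -> R) : \sum_(k | y k != yh k) F k = \sum_(k | x k != xh k) F k.
  exact: eq_bigl.
set Sg := \sum_(k | x k != xh k) sigB d (x k) (xh k).
have Sg0 : 0 <= Sg.
  apply: sumr_ge0 => k _; rewrite ex exh; case: (P k) => _ _ <- _ _; exact: sigX_ge0.
have hyX : aX d y yh = Num.sqrt Sg.
  rewrite /aX !esum.
  have e : \sum_(k | x k != xh k) muX d (y k) (yh k) = Sg.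
    by apply: eq_bigr => k _; rewrite ey eyh ex exh; case: (P k) => _ _ <- _ _.
  have e' : \sum_(k | x k != xh k) sigX d (y k) (yh k) = Sg := e.
  rewrite e; try rewrite divsqrt //.
have hyB : aB d y yh = Num.sqrt Sg.
  rewrite /aB !esum.
  have e1 : \sum_(k | x k != xh k) muB d (y k) (yh k) = Sg.
    by apply: eq_bigr => k _; rewrite ey eyh ex exh /muB; case: (P k) => _ -> <- _ _.
  have e2 : \sum_(k | x k != xh k) sigB d (y k) (yh k) = Sg.
    by apply: eq_bigr => k _; rewrite ey eyh ex exh {1}/sigB; case: (P k) => _ -> <- _ _.
  by rewrite e1 e2 divsqrt.
split.
- apply/negP => /eqP e; move/negP: hne; apply; apply/eqP/ffunP => k.
  by have := epred k; rewrite e eqxx => /esym/negbFE/eqP.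
- rewrite hyX /aB; apply: le_div_sqrt => //; apply: ler_sum => k _.
  rewrite ex exh; by case: (P k).
- rewrite hyB /aX.
  have -> : \sum_(k | x k != xh k) muX d (x k) (xh k) =
            \sum_(k | x k != xh k) sigX d (x k) (xh k) by [].
  rewrite divsqrt; last by apply: sumr_ge0 => k _; exact: sigX_ge0.
  rewrite ler_sqrt; last by apply: sumr_ge0 => k _; exact: sigX_ge0.
  apply: ler_sum => k _; rewrite ex exh; case: (P k) => _ _ <- _ h.
  exact: le_trans h (le_refl _).
Qed.

Lemma foldr_min_le (z : R) s x : x \in s -> foldr Num.min z s <= x.
Proof.
elim: s => //= a t IH; rewrite in_cons => /orP [/eqP ->|h].
  by rewrite ge_min lexx.
by rewrite ge_min IH ?orbT.
Qed.

Lemma foldr_min_in (z : R) s : foldr Num.min z s \in z :: s.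
Proof.
elim: s => [|a t IH] /=; first by rewrite mem_seq1.
case: (leP a (foldr Num.min z t)) => h.
  by rewrite !in_cons eqxx !orbT.
move: IH; rewrite !in_cons => /orP [->//|->]; by rewrite !orbT.
Qed.

Lemma seqmin_le (s : seq R) x : x \in s -> seqmin s <= x.
Proof. exact: foldr_min_le. Qed.

Lemma seqmin_in (s : seq R) : s != [::] -> seqmin s \in s.
Proof.
case: s => // a t _; have := foldr_min_in a (a :: t).
by rewrite /seqmin /= in_cons => /orP [/eqP {1}->|//]; rewrite in_cons eqxx.
Qed.

Lemma core q (sel : bool * bool -> bool)
  (Hpos : forall u v w : bool * bool, sel w -> posfacts q u v w)
  N (B : {set bword N}) (lin : linear_code B) (b'' : bword N)
  (hb : b'' \in B) (hs : forall k, sel (b'' k)) :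
  min_aX d q B = min_aB d q B.
Proof.
set L := distinct_pairs (cm_code d q B).
have comp : forall p, p \in L -> exists2 p', p' \in L &
    aX d p'.1 p'.2 <= aB d p.1 p.2 /\ aB d p'.1 p'.2 <= aX d p.1 p.2.
  move=> [x xh]; rewrite mem_filter /= => /andP [hne /allpairsP [[x1 x2] [/= h1 h2 [ex exh]]]].
  subst x1 x2.
  move/mapP: h1 => [b hb1 ex]; move/mapP: h2 => [b' hb2 exh]; subst x xh.
  rewrite mem_enum in hb1; rewrite mem_enum in hb2.
  have [hyne hle1 hle2] := companion sel Hpos b b' b'' hs hne.
  exists (cm_word d q b'', cm_word d q (xorw (xorw b b') b'')) => //.
  rewrite mem_filter /= hyne; apply: allpairs_f; apply: map_f; rewrite mem_enum //.
  by apply: lin.2 => //; apply: lin.2.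
have gen : forall (f g : {ffun 'I_N -> R} * {ffun 'I_N -> R} -> R),
    (forall p, p \in L -> exists2 p', p' \in L & f p' <= g p) ->
    seqmin [seq f p | p <- L] <= seqmin [seq g p | p <- L].
  move=> f g H; have [->|nz] := eqVneq L [::]; first by [].
  have : [seq g p | p <- L] != [::] by rewrite -size_eq0 size_map size_eq0.
  move/seqmin_in/mapP => [p hp ->]; have [p' hp' h] := H p hp.
  by apply: le_trans h; apply: seqmin_le; apply: map_f.
apply: le_anti; apply/andP; split.
  apply: (gen (fun p => aX d p.1 p.2) (fun p => aB d p.1 p.2)) => p hp.
  by have [p' ? [? ?]] := comp p hp; exists p'.
apply: (gen (fun p => aB d p.1 p.2) (fun p => aX d p.1 p.2)) => p hp.
by have [p' ? [? ?]] := comp p hp; exists p'.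
Qed.

Lemma loss0 q N (B : {set bword N}) : min_aX d q B = min_aB d q B ->
  asym_loss d q B = 0.
Proof.
rewrite /asym_loss /log10 => ->; set m := min_aB d q B.
have [->|m0] := eqVneq m 0; first by rewrite mul0r ln0 // mul0r mulr0.
by rewrite divff // ln1 mul0r mulr0.
Qed.
End S.

Theorem theorem3 (R : realType) (d : R) (N : nat) (B : {set bword N}) :
  0 < d -> linear_code B -> (1 < #|B|)%N ->
  ((exists2 b'' : bword N, b'' \in B & forall k : 'I_N, (b'' k).2 = true) ->
     asym_loss d [:: 0; 1; 3; 2]%N B = 0) /\
  ((exists2 b'' : bword N, b'' \in B & forall k : 'I_N, (b'' k).1 = true) ->
     asym_loss d [:: 0; 2; 3; 1]%N B = 0).
Proof.
move=> dpos lin _; split => -[b'' hb hs]; apply: loss0.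
  exact: (@core R d _ (fun w : bool * bool => w.2) (@pos1 R d dpos) N B lin b'' hb hs).
exact: (@core R d _ (fun w : bool * bool => w.1) (@pos2 R d dpos) N B lin b'' hb hs).
Qed.
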